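(* Let $\mathcal{A}=\{A_1,\dots,A_m\}$ be a bimodal collection of pairwise disjoint nonempty subsets of a finite abelian group $G$, with internal difference groups $H_1,\dots,H_m$, labelled so that $|A_i|<|H_i|$ exactly for $i=1,\dots,r$, where $r\ge2$. Let $D=(a_1+H_1)\setminus A_1$, where $a_1+H_1$ is the coset of $H_1$ containing $A_1$, and suppose $\mathcal{A}$ is in canonical position, i.e. $D$ is a subgroup of $G$. Let $A=A_1\cup\dots\cup A_m$ and $H=H_1+H_2+\dots+H_r$. If $A\setminus H$ is nonempty, then $A\setminus H$ is a union of cosets of $H$, and the sets $A_i$ lying in $A\setminus H$ arise from a subdivision of these cosets of $H$: they partition $A\setminus H$ and each of them is contained in a single coset of $H$.
   Context: $G$ is written additively. The internal difference group $H_i$ of $A_i$ is the subgroup generated by all $x-y$ with $x,y\in A_i$; $A_i$ lies in a single coset of $H_i$ and $|A_i|\le|H_i|$. A collection $\{A_1,\dots,A_m\}$ of pairwise disjoint subsets of $G$ is bimodal if for every $i$ and every $\delta\in G\setminus\{0\}$, the number $N_i(\delta)$ of pairs $(a,b)$ with $a\in A_i$, $b\in A_j$ for some $j\neq i$, and $a-b=\delta$, satisfies $N_i(\delta)\in\{0,|A_i|\}$. (For such collections with $r\ge2$ the set $D$ equals $(a_i+H_i)\setminus A_i$ for every $i\le r$ and is a coset of a subgroup; canonical position means the collection has been translated so that $D$ is a subgroup.) *)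

(* Defs.v *)
From mathcomp Require Import all_boot all_order all_algebra all_fingroup.
Set Implicit Arguments. Unset Strict Implicit. Unset Printing Implicit Defensive.
Import GRing.Theory.
Local Open Scope ring_scope.

(* G : finZmodType is a finite abelian group written additively; through
   finalg it is also a finGroupType whose group law is +, so the library's
   generated subgroup <<S>> and group_set apply. *)

Section Bimodal.
Variable G : finZmodType.

Definition diffgroup (X : {set G}) : {set G} :=
  <<[set x - y | x in X, y in X]>>%g.

Definition tr (a : G) (S : {set G}) : {set G} := [set a + s | s in S].

Definition setsum (I : finType) (P : pred I) (F : I -> {set G}) : {set G} :=
  \big[(fun X Y : {set G} => [set x + y | x in X, y in Y]) / [set 0]]_(i | P i) F i.

Variable m : nat.
Variable A : 'I_m -> {set G}.

Definition others (i : 'I_m) : {set G} := \bigcup_(j | j != i) A j.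

Definition Ncount (i : 'I_m) (d : G) : nat :=
  #|[set p : G * G | (p.1 \in A i) && (p.2 \in others i) && (p.1 - p.2 == d)]|.

Definition pairwise_disjoint : Prop :=
  forall i j : 'I_m, i != j -> [disjoint A i & A j].

Definition bimodal : Prop :=
  pairwise_disjoint /\
  forall (i : 'I_m) (d : G), d != 0 -> (Ncount i d == 0)%N || (Ncount i d == #|A i|).

End Bimodal.

(* Main.v *)
Require Import Defs.
From mathcomp Require Import all_boot all_order all_algebra all_fingroup.
Set Implicit Arguments. Unset Strict Implicit. Unset Printing Implicit Defensive.
Import GRing.Theory.
Local Open Scope ring_scope.

Lemma dg_diff (G : finZmodType) (X : {set G}) x y :
  x \in X -> y \in X -> x - y \in diffgroup X.
Proof.
move=> hx hy; rewrite /diffgroup; apply: mem_gen.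
exact: (imset2_f (fun a b : G => a - b) hx hy).
Qed.

Lemma dg0 (G : finZmodType) (X : {set G}) : (0 : G) \in diffgroup X.
Proof. exact: (group1 [group of diffgroup X]). Qed.

Lemma dgD (G : finZmodType) (X : {set G}) x y :
  x \in diffgroup X -> y \in diffgroup X -> x + y \in diffgroup X.
Proof. move=> hx hy; exact: (@groupM _ [group of diffgroup X] x y hx hy). Qed.

Lemma dgN (G : finZmodType) (X : {set G}) x :
  x \in diffgroup X -> - x \in diffgroup X.
Proof. move=> hx; exact: (@groupVr _ [group of diffgroup X] x hx). Qed.

Lemma gen_periodic (G : finZmodType) (S P : {set G}) :
  (forall x s, x \in P -> s \in S -> x + s \in P) ->
  forall x h, x \in P -> h \in <<S>>%g -> x + h \in P.
Proof.
move=> hS.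
pose T := [set t : G | [forall x in P, x + t \in P]].
have gT : group_set T.
  apply/andP; split.
    by rewrite inE; apply/forall_inP => x xP; rewrite [_ + _]addr0.
  apply/subsetP => z /mulsgP [u v]; rewrite !inE => /forall_inP hu /forall_inP hv ->.
  apply/forall_inP => x xP; rewrite [(u * v)%g]/= addrA; apply: hv; exact: hu.
have sub : (<<S>>%g \subset Group gT).
  rewrite gen_subG; apply/subsetP => s sS; rewrite inE; apply/forall_inP => x xP; exact: hS.
move=> x h xP hS'; have := subsetP sub h hS'; rewrite inE => /forall_inP; exact.
Qed.

Lemma othersP (G : finZmodType) m (A : 'I_m -> {set G}) i x :
  reflect (exists2 j, j != i & x \in A j) (x \in others A i).
Proof.
apply: (iffP bigcupP) => [[j hj hx]|[j hj hx]]; by exists j.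
Qed.

Lemma others_notin (G : finZmodType) m (A : 'I_m -> {set G}) i x :
  pairwise_disjoint A -> x \in others A i -> x \notin A i.
Proof.
move=> hd /othersP [j hj hx]; apply/negP => hi.
by have := disjointFr (hd j i hj) hx; rewrite hi.
Qed.

Lemma in_others (G : finZmodType) m (A : 'I_m -> {set G}) i x :
  x \in \bigcup_j A j -> x \notin A i -> x \in others A i.
Proof.
move=> /bigcupP [j _ hj] hi; apply/othersP; exists j => //.
by apply/eqP => eji; move: hi; rewrite -eji hj.
Qed.

Lemma others_in (G : finZmodType) m (A : 'I_m -> {set G}) i x :
  x \in others A i -> x \in \bigcup_j A j.
Proof. by move=> /othersP [j _ hj]; apply/bigcupP; exists j. Qed.

Lemma subBK (G : finZmodType) (a b d : G) : a - b = d -> b = a - d.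
Proof. by move=> <-; rewrite opprB addrC subrK. Qed.

Lemma bim_per (G : finZmodType) m (A : 'I_m -> {set G}) :
  bimodal A -> forall i x h, x \in others A i -> h \in diffgroup (A i) ->
  x + h \in others A i.
Proof.
move=> [hd hb] i; apply: gen_periodic => x s xO /imset2P [a a' ha ha' ->].
set d := a' - x.
have d0 : d != 0.
  rewrite /d subr_eq0; apply/eqP => e; move: (others_notin hd xO).
  by rewrite -e ha'.
pose Sp := [set p : G * G | (p.1 \in A i) && (p.2 \in others A i) && (p.1 - p.2 == d)].
have hN : Ncount A i d = #|Sp| by [].
have inSp : (a', x) \in Sp by rewrite inE /= ha' xO /= eqxx.
have : (Ncount A i d == 0)%N || (Ncount A i d == #|A i|) by exact: hb.
rewrite hN; have -> : (#|Sp| == 0)%N = false.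
  by apply/negbTE; rewrite -lt0n; apply/card_gt0P; exists (a', x).
move=> /= /eqP cS.
have inj : {in Sp &, injective (fun p : G * G => p.1)}.
  move=> [p1 p2] [q1 q2]; rewrite !inE /= => /andP [_ /eqP e1] /andP [_ /eqP e2] e.
  rewrite e in e1 *; congr (_, _).
  by rewrite (subBK e1) (subBK e2).
have sub : [set p.1 | p in Sp] \subset A i.
  by apply/subsetP => z /imsetP [p]; rewrite inE => /andP [/andP [h _] _] ->.
have eqS : [set p.1 | p in Sp] = A i.
  apply/eqP; rewrite eqEcard sub /= card_in_imset // cS //.
have : a \in [set p.1 | p in Sp] by rewrite eqS.
case/imsetP => [[p1 p2]]; rewrite inE /= => /andP [/andP [_ h2] /eqP e] e1.
have -> : x + (a - a') = p2.
  rewrite /d in e; rewrite -e1 in e.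
  by rewrite (subBK e) opprB addrCA.
exact: h2.
Qed.

Lemma tr_card (G : finZmodType) (b : G) S : #|tr b S| = #|S|.
Proof. by apply: card_imset; apply: addrI. Qed.

Lemma sub_tr (G : finZmodType) (X : {set G}) b : b \in X -> X \subset tr b (diffgroup X).
Proof.
move=> hb; apply/subsetP => y hy; apply/imsetP; exists (y - b); first exact: dg_diff.
by rewrite addrC subrK.
Qed.

Lemma L_full (G : finZmodType) (X : {set G}) b h :
  b \in X -> (#|diffgroup X| <= #|X|)%N -> h \in diffgroup X -> b + h \in X.
Proof.
move=> hb hc hh.
have e : X == tr b (diffgroup X) by rewrite eqEcard sub_tr // tr_card.
by rewrite (eqP e); apply: imset_f.
Qed.

Lemma L_nonfull (G : finZmodType) (X : {set G}) b :
  b \in X -> (#|X| < #|diffgroup X|)%N -> exists2 g, g \in diffgroup X & b + g \notin X.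
Proof.
move=> hb hc; case: (boolP [exists g in diffgroup X, b + g \notin X]).
  by case/exists_inP => g h1 h2; exists g.
rewrite negb_exists_in => /forall_inP hall.
have : tr b (diffgroup X) \subset X.
  apply/subsetP => y /imsetP [g hg ->]; by have := hall g hg; rewrite negbK.
move/subset_leq_card; rewrite tr_card => h; by move: hc; rewrite ltnNge h.
Qed.

Lemma setsum_ub (G : finZmodType) (I : finType) (P : pred I) (F : I -> {set G}) (T : {set G}) :
  (0 : G) \in T -> (forall x y, x \in T -> y \in T -> x + y \in T) ->
  (forall i, P i -> F i \subset T) -> setsum P F \subset T.
Proof.
move=> h0 hD hF; rewrite /setsum.
apply: (big_ind (fun S : {set G} => S \subset T)) => //.
  by apply/subsetP => x; rewrite inE => /eqP ->.
move=> X Y hX hY; apply/subsetP => z /imset2P [x y hx hy ->].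
by apply: hD; [apply: (subsetP hX) | apply: (subsetP hY)].
Qed.

Definition closedS (G : finZmodType) (S : {set G}) :=
  [/\ (0 : G) \in S, (forall x y, x \in S -> y \in S -> x + y \in S) & (forall x, x \in S -> - x \in S)].

Lemma setsum_grp (G : finZmodType) (I : finType) (P : pred I) (F : I -> {set G}) :
  (forall i, closedS (F i)) -> closedS (setsum P F).
Proof.
move=> hF; rewrite /setsum; apply: big_ind => //.
  split; first by rewrite inE.
    by move=> x y; rewrite !inE => /eqP -> /eqP ->; rewrite addr0.
  by move=> x; rewrite !inE => /eqP ->; rewrite oppr0.
move=> X Y [hX0 hXD hXN] [hY0 hYD hYN]; split.
- by rewrite -[0 : G]addr0; apply: imset2_f.
- move=> u v /imset2P [x y hx hy ->] /imset2P [x' y' hx' hy' ->].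
  rewrite addrACA; apply: imset2_f; [exact: hXD | exact: hYD].
- move=> u /imset2P [x y hx hy ->]; rewrite opprD; apply: imset2_f; [exact: hXN | exact: hYN].
Qed.

Lemma bigS_lb (G : finZmodType) (I : eqType) (s : seq I) (P : pred I) (F : I -> {set G}) :
  (forall i, (0 : G) \in F i) -> forall i, i \in s -> P i ->
  F i \subset \big[(fun X Y : {set G} => [set x + y | x in X, y in Y]) / [set 0]]_(j <- s | P j) F j.
Proof.
move=> h0.
have z0 : forall s' : seq I, (0 : G) \in \big[(fun X Y : {set G} => [set x + y | x in X, y in Y]) / [set 0]]_(j <- s' | P j) F j.
  move=> s'; apply: (big_ind (fun S : {set G} => (0 : G) \in S)); first by rewrite inE.
    by move=> X Y hX hY; rewrite -[0 : G]addr0; apply: imset2_f.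
  by move=> j _; exact: h0.
elim: s => [//|a s IH] i; rewrite inE big_cons => /orP [/eqP ->|his] hP.
  rewrite hP; apply/subsetP => x hx; rewrite -[x]addr0; apply: imset2_f => //.
case: (P a); last exact: IH.
apply/subsetP => x hx; rewrite -[x]add0r; apply: imset2_f => //.
exact: (subsetP (IH i his hP)).
Qed.

Lemma setsum_lb (G : finZmodType) (I : finType) (P : pred I) (F : I -> {set G}) i :
  (forall i, (0 : G) \in F i) -> P i -> F i \subset setsum P F.
Proof. move=> h0 hP; apply: bigS_lb => //; exact: mem_index_enum. Qed.

Lemma dgC (G : finZmodType) (X : {set G}) : closedS (diffgroup X).
Proof. split; [exact: dg0 | exact: dgD | exact: dgN]. Qed.

Unset Implicit Arguments.
Set Strict Implicit.

Theorem proposition3p9 (G : finZmodType) (m r : nat) (A : 'I_m -> {set G})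
  (Abim : bimodal A)
  (Ane : forall i, A i != set0)
  (r2 : (2 <= r)%N) (rm : (r <= m)%N)
  (Hlab : forall i : 'I_m, (#|A i| < #|diffgroup (A i)|)%N = (i < r)%N)
  (a1 : G) (i1 : 'I_m) (i1_0 : val i1 = 0%N) (a1A : a1 \in A i1)
  (Dsub : group_set (tr a1 (diffgroup (A i1)) :\: A i1)) :
  let AA := \bigcup_i A i in
  let H := setsum (fun i : 'I_m => (i < r)%N) (fun i => diffgroup (A i)) in
  AA :\: H != set0 ->
  AA :\: H = \bigcup_(x in AA :\: H) tr x H /\
  AA :\: H = \bigcup_(i | A i \subset AA :\: H) A i /\
  (forall i, A i \subset AA :\: H -> exists x, A i \subset tr x H).
Proof.
move=> AA H _.
have hd := Abim.1.
have i1r : (i1 < r)%N by rewrite i1_0 (leq_trans _ r2).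
have inAA : forall j x, x \in A j -> x \in AA by move=> j x hx; apply/bigcupP; exists j.
have D1 : (0 : G) \in tr a1 (diffgroup (A i1)) :\: A i1 by case/andP: Dsub.
move: D1; rewrite inE => /andP [n0 /imsetP [h0 h0H e0]].
have a1H : a1 \in diffgroup (A i1).
  have -> : a1 = - h0 by apply/eqP; rewrite -addr_eq0 -e0.
  exact: dgN.
have A1sub : forall y, y \in A i1 -> y \in diffgroup (A i1).
  move=> y hy; have -> : y = a1 + (y - a1) by rewrite addrC subrK.
  by apply: dgD => //; apply: dg_diff.
have notA0 : (0 : G) \notin AA.
  apply/negP => h; have o0 := in_others h n0.
  have := bim_per Abim o0 a1H; rewrite add0r => o1.
  by move: (others_notin hd o1); rewrite a1A.
have Hc : closedS H by apply: setsum_grp => i; exact: dgC.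
case: Hc => H0 HD HN.
have HiH : forall i : 'I_m, (i < r)%N -> diffgroup (A i) \subset H.
  by move=> i hi; apply: (setsum_lb (fun j => dg0 (A j))).
have AkH : forall k : 'I_m, (k < r)%N -> forall y, y \in A k -> y \in H.
  move=> k kr; case: (eqVneq k i1) => [-> | nk].
    by move=> y hy; apply: (subsetP (HiH i1 i1r)); apply: A1sub.
  pose M := [set u + v | u in diffgroup (A i1), v in diffgroup (A k)].
  case/set0Pn: (Ane k) => b hb.
  have bM : b \in M.
    case: (boolP (b \in M)) => // bM; exfalso.
    have stepa : forall h, h \in diffgroup (A k) -> h \in diffgroup (A i1).
      move=> h hh; apply/negPn/negP => hn.
      have a1o : a1 \in others A k by apply/othersP; exists i1 => //; rewrite eq_sym.
      have qo := bim_per Abim a1o hh.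
      have qn : a1 + h \notin A i1.
        apply/negP => hq; apply/negP: hn; rewrite negbK.
        have -> : h = - a1 + (a1 + h) by rewrite addKr.
        by apply: dgD; [apply: dgN | apply: A1sub].
      have qo1 := in_others (others_in qo) qn.
      have := bim_per Abim qo1 (dgN a1H); rewrite [a1 + h]addrC addrK => ho1.
      have hnk : h \notin A k.
        apply/negP => hk; apply/negP: bM; rewrite negbK.
        have -> : b = 0 + (h + (b - h)) by rewrite add0r addrC subrK.
        by apply: imset2_f; [exact: dg0 | apply: dgD => //; apply: dg_diff].
      have hok := in_others (others_in ho1) hnk.
      have := bim_per Abim hok (dgN hh); rewrite addrN => o0.
      by move/negP: notA0; apply; apply: others_in o0.
    have [g gH gn] := L_nonfull hb (eq_trans (Hlab k) kr).
    have bo1 : b \in others A i1 by apply/othersP; exists k.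
    have bgo := bim_per Abim bo1 (stepa g gH).
    have bgk := in_others (others_in bgo) gn.
    have := bim_per Abim bgk (dgN gH); rewrite addrK => bk.
    by move: (others_notin hd bk); rewrite hb.
  have bH : b \in H.
    case/imset2P: bM => u v hu hv ->; apply: HD.
      by apply: (subsetP (HiH i1 i1r)).
    by apply: (subsetP (HiH k kr)).
  move=> y hy; have -> : y = b + (y - b) by rewrite addrC subrK.
  apply: HD => //; apply: (subsetP (HiH k kr)); exact: dg_diff.
have Lb : forall h, h \in H -> forall x, x \in AA :\: H -> x + h \in AA :\: H.
  pose T := [set h | [forall x in AA :\: H, x + h \in AA :\: H]].
  have : setsum (fun i : 'I_m => (i < r)%N) (fun i => diffgroup (A i)) \subset T.
    apply: setsum_ub.
    - by rewrite inE; apply/forall_inP => x hx; rewrite addr0.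
    - move=> x y; rewrite !inE => /forall_inP hx /forall_inP hy.
      by apply/forall_inP => z hz; rewrite addrA; apply: hy; apply: hx.
    - move=> k kr; apply/subsetP => h hh; rewrite inE; apply/forall_inP => x.
      rewrite inE => /andP [xnH xA].
      have xnk : x \notin A k by apply/negP => xk; move/negP: xnH; apply; exact: AkH xk.
      have xo := in_others xA xnk.
      have xho := bim_per Abim xo hh.
      rewrite inE (others_in xho) andbT; apply/negP => xhH; move/negP: xnH; apply.
      have -> : x = (x + h) + - h by rewrite addrK.
      by apply: HD => //; apply: HN; apply: (subsetP (HiH k kr)).
  move=> sub h hh x hx; have := subsetP sub h hh; rewrite inE => /forall_inP; exact.
have HallH : forall i, diffgroup (A i) \subset H.
  move=> i; case: (boolP (i < r)%N) => ir; first exact: HiH.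
  have hc : (#|diffgroup (A i)| <= #|A i|)%N by rewrite leqNgt Hlab.
  have Aper : forall x k, x \in AA -> k \in diffgroup (A i) -> x + k \in AA.
    move=> x k hx hk; case: (boolP (x \in A i)) => xi.
      by apply: (inAA i); apply: L_full.
    exact: others_in (bim_per Abim (in_others hx xi) hk).
  apply/subsetP => k hk; apply/negPn/negP => kn.
  have a1H' : a1 \in H by apply: (AkH i1 i1r).
  have q : a1 + k \in AA :\: H.
    rewrite inE Aper ?(inAA i1) // andbT; apply/negP => qH; apply/negP: kn; rewrite negbK.
    have -> : k = - a1 + (a1 + k) by rewrite addKr.
    by apply: HD => //; apply: HN.
  have := Lb _ (HN _ a1H') _ q; rewrite [a1 + k]addrC addrK inE => /andP [_ kA].
  have := Aper _ _ kA (dgN hk); rewrite addrN => h0A.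
  by move/negP: notA0.
split.
  apply/setP => x; apply/idP/idP => hx.
    apply/bigcupP; exists x => //; apply/imsetP; exists 0 => //; by rewrite addr0.
  case/bigcupP: hx => y hy /imsetP [h hh ->]; exact: Lb.
split.
  apply/setP => x; apply/idP/idP => hx.
    have := hx; rewrite inE => /andP [_ /bigcupP [j _ hj]].
    apply/bigcupP; exists j => //; apply/subsetP => y hy.
    have -> : y = x + (y - x) by rewrite addrC subrK.
    apply: Lb => //; apply: (subsetP (HallH j)); exact: dg_diff.
  by case/bigcupP: hx => j hsub hy; apply: (subsetP hsub).
move=> i _; case/set0Pn: (Ane i) => b hb; exists b.
apply/subsetP => y hy; apply/imsetP; exists (y - b).
  apply: (subsetP (HallH i)); exact: dg_diff.
by rewrite addrC subrK.
Qed.
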